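(* Let $G=(V,E)$ be a simple undirected graph. A vector $x\in\{0,1\}^{E^c}$ satisfies $$\sum_{f\in \textnormal{int}(C)} x_f-(|C|-3)\Big(\sum_{f\in F(C)}x_f-|F(C)|+1\Big)\ \ge 0$$ for every $C\in\mathcal{C}$ with $\textnormal{int}(C)\cap E=\emptyset$ if and only if $x\in X(G)$. Consequently the integer program of minimizing $\sum_{f\in E^c}x_f$ over such $x$ is a valid formulation of the minimum chordal completion problem: its optimal solutions are exactly the characteristic vectors of minimum-cardinality chordal completions of $G$.
   Context: $E^c=\binom{V}{2}\setminus E$. For an ordered list $C=(v_0,\ldots,v_{k-1})$ of distinct vertices of $V$: $V(C)=\{v_0,\ldots,v_{k-1}\}$, $|C|=k$, $\textnormal{ext}(C)=\{\{v_{k-1},v_0\}\}\cup\{\{v_{i-1},v_i\}:1\le i\le k-1\}$, $\textnormal{int}(C)=\binom{V(C)}{2}\setminus\textnormal{ext}(C)$, and $F(C)=\textnormal{ext}(C)\setminus E$. $\mathcal{C}$ is the family of all ordered lists of at least three distinct vertices of $V$. For $x\in\{0,1\}^{E^c}$, $E(x)=\{f\in E^c:x_f=1\}$, and $X(G)=\{x\in\{0,1\}^{E^c}: (V,E\cup E(x))\text{ is chordal}\}$, where a graph is chordal if every cycle with at least four vertices has a chord (an edge joining two nonconsecutive vertices of the cycle). A chordal completion of $G$ is a set $F\subseteq E^c$ with $(V,E\cup F)$ chordal. *)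

(* Defs.v *)
From mathcomp Require Import all_boot all_order all_algebra.
Set Implicit Arguments. Unset Strict Implicit. Unset Printing Implicit Defensive.

Section Graphs.
Variable V : finType.

Definition pairs : {set {set V}} := [set p : {set V} | #|p| == 2].

Definition simple_graph (E : {set {set V}}) : Prop := E \subset pairs.

Definition compl_edges (E : {set {set V}}) : {set {set V}} := pairs :\: E.

(* Index type of the vector x \in {0,1}^{E^c}. *)
Definition nonedge (E : {set {set V}}) := {p : {set V} | p \in compl_edges E}.

(* Ordered lists C = (v_0,...,v_{k-1}) of distinct vertices are uniq seqs. *)
Definition vset (C : seq V) : {set V} := [set v in C].

(* ext(C) = {{v_{k-1},v_0}} \cup {{v_{i-1},v_i} : 1 <= i <= k-1} *)
Definition ext (C : seq V) : {set {set V}} :=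
  [set [set p.1; p.2] | p in zip C (rot 1 C)].

Definition int_ (C : seq V) : {set {set V}} :=
  [set p in pairs | p \subset vset C] :\: ext C.

Definition Fc (E : {set {set V}}) (C : seq V) : {set {set V}} := ext C :\: E.

Definition chordal (H : {set {set V}}) : Prop :=
  forall C : seq V, uniq C -> 4 <= size C -> ext C \subset H ->
    exists2 f, f \in int_ C & f \in H.

Definition Ex (E : {set {set V}}) (x : nonedge E -> bool) : {set {set V}} :=
  [set val f | f in [pred f : nonedge E | x f]].

Definition in_XG (E : {set {set V}}) (x : nonedge E -> bool) : Prop :=
  chordal (E :|: Ex x).

Definition chordal_completion (E F : {set {set V}}) : Prop :=
  F \subset compl_edges E /\ chordal (E :|: F).

Definition min_chordal_completion (E F : {set {set V}}) : Prop :=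
  chordal_completion E F /\
  forall F', chordal_completion E F' -> #|F| <= #|F'|.

Local Open Scope ring_scope.

Definition cycle_ineq (E : {set {set V}}) (x : nonedge E -> bool) (C : seq V)
  : Prop :=
  0 <= (\sum_(f : nonedge E | val f \in int_ C) (x f : nat)%:Z)
       - ((size C)%:Z - 3) *
         ((\sum_(f : nonedge E | val f \in Fc E C) (x f : nat)%:Z)
          - (#|Fc E C|)%:Z + 1).

Definition feasible (E : {set {set V}}) (x : nonedge E -> bool) : Prop :=
  forall C : seq V, uniq C -> (3 <= size C)%N -> int_ C :&: E = set0 ->
    cycle_ineq x C.

Definition objective (E : {set {set V}}) (x : nonedge E -> bool) : nat :=
  (\sum_(f : nonedge E) (x f : nat))%N.

End Graphs.

(* Main.v *)
Require Import Defs.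
From mathcomp Require Import all_boot all_order all_algebra.
From mathcomp Require Import zify.
Set Implicit Arguments. Unset Strict Implicit. Unset Printing Implicit Defensive.

Lemma imset_cons (T1 T2 : finType) (f : T1 -> T2) a l :
  [set f p | p in a :: l] = f a |: [set f p | p in l].
Proof.
apply/setP => e; rewrite in_setU1; apply/imsetP/orP.
- move=> [p]; rewrite inE => /orP[/eqP->|hp] ->; first by left.
  by right; apply/imsetP; exists p.
- move=> [/eqP->|/imsetP[p hp ->]]; first by exists a; rewrite ?inE ?eqxx.
  by exists p; rewrite // inE hp orbT.
Qed.

Lemma imset_nil (T1 T2 : finType) (f : T1 -> T2) :
  [set f p | p in [::]] = set0.
Proof. by apply/setP => e; rewrite inE; apply/imsetP => -[p]. Qed.

Fixpoint pe (V : finType) (x : V) (s : seq V) : {set {set V}} :=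
  if s is y :: s' then [set x; y] |: pe y s' else set0.

Lemma zip_img (V : finType) (s : seq V) x z :
  [set [set p.1; p.2] | p in zip (x :: s) (rcons s z)] = [set last x s; z] |: pe x s.
Proof.
elim: s x => [|y s IH] x /=.
  by rewrite imset_cons imset_nil setU0.
by rewrite imset_cons IH /= setUCA.
Qed.

Lemma ext_cons (V : finType) (x : V) s : ext (x :: s) = [set last x s; x] |: pe x s.
Proof. by rewrite /ext rot1_cons zip_img. Qed.

Lemma pe_cat (V : finType) (x v : V) a b :
  pe x (a ++ v :: b) = pe x a :|: ([set last x a; v] |: pe v b).
Proof.
elim: a x => [|y a IH] x /=; first by rewrite set0U.
by rewrite IH setUA.
Qed.

Lemma pe_rcons (V : finType) (x v : V) a :
  pe x (rcons a v) = pe x a :|: [set [set last x a; v]].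
Proof. by rewrite -cats1 pe_cat /= setU0. Qed.

Lemma pe_mem (V : finType) (x : V) s e : e \in pe x s ->
  exists y z, [/\ y \in x :: s, z \in s & e = [set y; z]].
Proof.
elim: s x => [|y s IH] x /=; first by rewrite inE.
rewrite in_setU1 => /orP[/eqP->|/IH[y' [z [h1 h2 ->]]]].
  by exists x, y; rewrite !inE !eqxx.
by exists y', z; split => //; rewrite inE ?h1 ?h2 ?orbT.
Qed.

Lemma drop_zip (T1 T2 : eqType) (s : seq T1) (t : seq T2) n :
  drop n (zip s t) = zip (drop n s) (drop n t).
Proof. elim: s t n => [|x s IH] [|y t] [|n] //=; by [case: (drop _ _)|rewrite IH]. Qed.

Lemma take_zip (T1 T2 : eqType) (s : seq T1) (t : seq T2) n :
  take n (zip s t) = zip (take n s) (take n t).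
Proof. elim: s t n => [|x s IH] [|y t] [|n] //=; by [case: (take _ _)|rewrite IH]. Qed.

Lemma zip_rot (T1 T2 : eqType) (s : seq T1) (t : seq T2) n : size s = size t ->
  zip (rot n s) (rot n t) = rot n (zip s t).
Proof.
by move=> hs; rewrite /rot zip_cat ?size_drop ?hs // drop_zip take_zip.
Qed.

Lemma ext_rot (V : finType) (C : seq V) n : ext (rot n C) = ext C.
Proof.
rewrite /ext rot_rot zip_rot ?size_rot //.
apply/setP => e; apply/imsetP/imsetP => -[p hp ->]; exists p => //.
  by rewrite mem_rot in hp.
by rewrite mem_rot.
Qed.

Lemma vset_rot (V : finType) (C : seq V) n : vset (rot n C) = vset C.
Proof. by apply/setP => e; rewrite !inE mem_rot. Qed.

Lemma int_rot (V : finType) (C : seq V) n : int_ (rot n C) = int_ C.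
Proof. by rewrite /int_ ext_rot vset_rot. Qed.

Lemma intmemE (V : finType) (C : seq V) e :
  e \in int_ C = [&& e \in pairs V, e \subset vset C & e \notin ext C].
Proof. by rewrite /int_ !inE andbC andbA. Qed.

Lemma last_in (V : eqType) (x : V) s : s != [::] -> last x s \in s.
Proof. by case: s => // y s _; rewrite /= mem_last. Qed.

Lemma split_step (V : finType) (H : {set {set V}}) (u v : V) a b :
  uniq (u :: a ++ v :: b) -> [set u; v] \in int_ (u :: a ++ v :: b) ->
  [set u; v] \in H -> ext (u :: a ++ v :: b) \subset H ->
  (forall C, size C < size (u :: a ++ v :: b) -> uniq C -> 3 <= size C ->
     ext C \subset H -> size C - 3 <= #|int_ C :&: H|) ->
  size (u :: a ++ v :: b) - 3 <= #|int_ (u :: a ++ v :: b) :&: H|.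
Proof.
move=> hU hf hfH hext IH.
have hU' : uniq ((u :: a) ++ (v :: b)) by [].
move: hU'; rewrite cat_uniq => /and3P[hUa /hasPn hD hUb].
move: hUa hUb; rewrite !cons_uniq => /andP[ua _] /andP[vb _].
have Db : forall z, z \in b -> z \in u :: rcons a v -> False.
  move=> z zb; have hz : z \notin u :: a by apply: hD; rewrite inE zb orbT.
  rewrite inE mem_rcons inE => /or3P[/eqP ez|/eqP ez|za].
  - by move: hz; rewrite ez inE eqxx.
  - by move: vb; rewrite -ez zb.
  - by move: hz; rewrite inE za orbT.
have Da : forall z, z \in a -> z \in u :: v :: b -> False.
  move=> z za; rewrite inE => /orP[/eqP ez|zb].
  - by rewrite -ez za in ua.
  - by have := hD z zb; rewrite inE za orbT.
have hvu : [set v; u] = [set u; v] by rewrite setUC.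
have hC : ext (u :: a ++ v :: b) =
   [set last v b; u] |: (pe u a :|: ([set last u a; v] |: pe v b)).
  by rewrite ext_cons pe_cat last_cat.
have hC1 : ext (u :: rcons a v) = [set u; v] |: (pe u a :|: [set [set last u a; v]]).
  by rewrite ext_cons pe_rcons last_rcons hvu.
have hC2 : ext (u :: v :: b) = [set last v b; u] |: ([set u; v] |: pe v b).
  by rewrite ext_cons.
move: (hf); rewrite intmemE => /and3P[_ _ hfn].
have anil : a != [::].
  apply/eqP => a0; move: hfn; rewrite hC a0 /= !inE eqxx.
  by rewrite ?orbT.
have bnil : b != [::].
  apply/eqP => b0; move: hfn; rewrite hC b0 /= hvu !inE eqxx.
  by [].
have la := last_in u anil; have lb := last_in v bnil.
have h1 : ext (u :: rcons a v) \subset H.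
  apply/subsetP => e; rewrite hC1 !inE => /or3P[/eqP->//|he|/eqP->].
  - by apply: (subsetP hext); rewrite hC !inE he orbT.
  - by apply: (subsetP hext); rewrite hC !inE eqxx ?orbT.
have h2 : ext (u :: v :: b) \subset H.
  apply/subsetP => e; rewrite hC2 !inE => /or3P[/eqP->|/eqP->//|he].
  - by apply: (subsetP hext); rewrite hC !inE eqxx ?orbT.
  - by apply: (subsetP hext); rewrite hC !inE he ?orbT.
have hI1 : forall e, e \in int_ (u :: rcons a v) -> e \in int_ (u :: a ++ v :: b).
  move=> e; rewrite !intmemE => /and3P[ep esub enot]; rewrite ep /=.
  apply/andP; split.
    apply: subset_trans esub _; apply/subsetP => z.
    rewrite !inE mem_cat mem_rcons !inE.
    by case/or3P => ->; rewrite ?orbT.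
  rewrite hC !inE; apply/negP => /or4P[/eqP E|he|/eqP E|he].
  - apply: (Db (last v b)) => //.
    have : last v b \in e by rewrite E !inE eqxx.
    by move/(subsetP esub); rewrite inE.
  - by rewrite hC1 !inE he orbT in enot.
  - by rewrite hC1 !inE E eqxx ?orbT in enot.
  - have [y [z [_ zb E]]] := pe_mem he.
    apply: (Db z) => //.
    have : z \in e by rewrite E !inE eqxx orbT.
    by move/(subsetP esub); rewrite inE.
have hI2 : forall e, e \in int_ (u :: v :: b) -> e \in int_ (u :: a ++ v :: b).
  move=> e; rewrite !intmemE => /and3P[ep esub enot]; rewrite ep /=.
  apply/andP; split.
    apply: subset_trans esub _; apply/subsetP => z.
    rewrite !inE mem_cat !inE.
    by case/or3P => ->; rewrite ?orbT.
  rewrite hC !inE; apply/negP => /or4P[/eqP E|he|/eqP E|he].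
  - by rewrite hC2 !inE E eqxx ?orbT in enot.
  - have [y [z [_ za E]]] := pe_mem he.
    apply: (Da z) => //.
    have : z \in e by rewrite E !inE eqxx orbT.
    by move/(subsetP esub); rewrite inE.
  - apply: (Da (last u a)) => //.
    have : last u a \in e by rewrite E !inE eqxx.
    by move/(subsetP esub); rewrite inE.
  - by rewrite hC2 !inE he ?orbT in enot.
have hdis : forall e, e \in int_ (u :: rcons a v) -> e \in int_ (u :: v :: b) -> False.
  move=> e; rewrite !intmemE => /and3P[ep s1 n1] /and3P[_ s2 _].
  have : e \subset [set u; v].
    apply/subsetP => z ze.
    have z1 := subsetP s1 z ze; have z2 := subsetP s2 z ze.
    rewrite /vset inE in z1; rewrite /vset inE in z2.
    move: z1; rewrite inE mem_rcons inE => /or3P[/eqP->|/eqP->|za].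
    - by rewrite !inE eqxx.
    - by rewrite !inE eqxx orbT.
    - by case: (Da z za z2).
  move=> es.
  have ee : e = [set u; v].
    apply/eqP; rewrite eqEcard es /=.
    rewrite inE in ep; rewrite (eqP ep) cards2.
    by case: (u != v).
  by rewrite ee hC1 !inE eqxx in n1.
set A := int_ (u :: rcons a v) :&: H.
set B := int_ (u :: v :: b) :&: H.
have hAB : A :&: B = set0.
  apply/setP => e; rewrite !in_setI in_set0.
  apply/negP => /andP[/andP[e1 _] /andP[e2 _]]; exact: hdis e1 e2.
have hsub : [set u; v] |: (A :|: B) \subset int_ (u :: a ++ v :: b) :&: H.
  apply/subsetP => e; rewrite in_setU1 in_setU !in_setI.
  case/or3P => [/eqP->|/andP[e1 eH]|/andP[e1 eH]]; first by rewrite hf hfH.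
  - by rewrite hI1.
  - by rewrite hI2.
have hnot : [set u; v] \notin A :|: B.
  rewrite in_setU !in_setI !intmemE hC1 hC2 !inE eqxx.
  by rewrite ?orbT !andbF.
have sa : 0 < size a by rewrite lt0n size_eq0.
have sb : 0 < size b by rewrite lt0n size_eq0.
have hcard := subset_leq_card hsub.
rewrite cardsU1 hnot cardsU hAB cards0 in hcard.
have hA : size (u :: rcons a v) - 3 <= #|A|.
  apply: IH => //.
  - rewrite /= size_rcons size_cat /=; move: sb; clear; lia.
  - apply: subseq_uniq hU; rewrite /= eqxx -cats1.
    by apply: cat_subseq => //; rewrite /= eqxx sub0seq.
  - rewrite /= size_rcons; move: sa; clear; lia.
have hB : size (u :: v :: b) - 3 <= #|B|.
  apply: IH => //.
  - rewrite /= size_cat /=; move: sa; clear; lia.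
  - apply: subseq_uniq hU; rewrite /= eqxx.
    exact: (cat_subseq (sub0seq a) (subseq_refl (v :: b))).
move: hA hB hcard sa sb; rewrite /= size_rcons size_cat /=.
move: #|A| #|B| #|int_ (u :: a ++ v :: b) :&: H| (size a) (size b).
clear; lia.
Qed.

Lemma chord_count (V : finType) (H : {set {set V}}) (hH : chordal H) n :
  forall C : seq V, size C = n -> uniq C -> 3 <= n -> ext C \subset H ->
  n - 3 <= #|int_ C :&: H|.
Proof.
elim/ltn_ind: n => n IHn C hs hu h3 hext.
case: (ltnP n 4) => h4.
  by rewrite (_ : n - 3 = 0) //; move: h3 h4; clear; lia.
have h4' : 4 <= size C by rewrite hs.
have [f hf hfH] := hH C hu h4' hext.
move: (hf); rewrite intmemE => /and3P[fp fs _].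
move: fp; rewrite inE => /cards2P[u [w [uw ef]]].
subst f.
have uC : u \in C by move: (subsetP fs u); rewrite !inE eqxx => /(_ isT).
have wC : w \in C by move: (subsetP fs w); rewrite !inE eqxx orbT => /(_ isT).
have hn : n = size (rot (index u C) C) by rewrite size_rot.
rewrite -(int_rot C (index u C)) hn.
rewrite -(ext_rot C (index u C)) in hext.
rewrite -(int_rot C (index u C)) in hf.
have hu' : uniq (rot (index u C) C) by rewrite rot_uniq.
have wC' : w \in rot (index u C) C by rewrite mem_rot.
have IH : forall C0, size C0 < size (rot (index u C) C) -> uniq C0 -> 3 <= size C0 ->
     ext C0 \subset H -> size C0 - 3 <= #|int_ C0 :&: H|.
  move=> C0 hlt hu0 h30 he0; apply: (IHn (size C0)) => //.
  by rewrite hn.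
move: hext hf hu' wC' IH; rewrite (rot_index uC).
move: (drop _ _ ++ take _ _) => s hext hf hu' wC' IH.
have ws : w \in s.
  move: wC'; rewrite inE => /orP[/eqP e|//].
  by rewrite e eqxx in uw.
move: hext hf hu' IH; case/splitPr: ws => a b hext hf hu' IH.
exact: split_step.
Qed.

Lemma sum_x (V : finType) (E : {set {set V}}) (x : nonedge E -> bool) (P : pred (nonedge E)) :
  (\sum_(f | P f) (x f : nat))%N = #|[set f | P f && x f]|.
Proof.
rewrite -sum1dep_card big_mkcond [RHS]big_mkcond /=.
by apply: eq_bigr => f _; case: (P f); case: (x f).
Qed.

Lemma card_Sx (V : finType) (E : {set {set V}}) (x : nonedge E -> bool) (S : {set {set V}}) :
  #|[set f : nonedge E | (val f \in S) && x f]| = #|S :&: Ex x|.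
Proof.
rewrite -(card_imset _ val_inj); apply: eq_card => e.
rewrite in_setI; apply/imsetP/andP.
  move=> [f]; rewrite inE => /andP[fS xf] ->; split => //.
  by apply/imsetP; exists f.
move=> [eS /imsetP[f xf ef]]; exists f => //.
by rewrite inE -ef eS.
Qed.

Lemma sumZ (V : finType) (E : {set {set V}}) (x : nonedge E -> bool) (P : pred (nonedge E)) :
  (\sum_(f | P f) Posz (x f : nat))%R = Posz (\sum_(f | P f) (x f : nat))%N.
Proof.
by elim/big_rec2: _ => // i y1 y2 _ ->; rewrite PoszD.
Qed.

Lemma obj_card (V : finType) (E : {set {set V}}) (x : nonedge E -> bool) :
  objective x = #|Ex x|.
Proof.
rewrite /objective (sum_x x xpredT) /Ex card_imset //; last exact: val_inj.
by apply: eq_card => f; rewrite !inE.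
Qed.

Lemma Ex_sub (V : finType) (E : {set {set V}}) (x : nonedge E -> bool) :
  Ex x \subset compl_edges E.
Proof. by apply/subsetP => e /imsetP[f _ ->]; exact: valP. Qed.

Lemma Ex_of (V : finType) (E F : {set {set V}}) : F \subset compl_edges E ->
  Ex (fun f : nonedge E => val f \in F) = F.
Proof.
move=> hF; apply/setP => e; apply/imsetP/idP.
  by move=> [f]; rewrite inE => hf ->.
move=> eF; exists (exist _ e (subsetP hF e eF)) => //.
Qed.

Lemma part1 (V : finType) (E : {set {set V}}) (x : nonedge E -> bool) :
  feasible x <-> in_XG x.
Proof.
split.
- move=> hx C hu h4 hext.
  have [/set0Pn [f]|h0] := boolP (int_ C :&: (E :|: Ex x) != set0).
    by rewrite in_setI => /andP[f1 f2]; exists f.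
  move: h0; rewrite negbK => /eqP h0.
  have hIE : int_ C :&: E = set0.
    apply/setP => e; rewrite in_setI in_set0; apply/negP => /andP[e1 e2].
    by have := in_set0 e; rewrite -h0 in_setI e1 in_setU e2.
  have h3 : (3 <= size C)%N by move: h4; clear; lia.
  have := hx C hu h3 hIE; rewrite /cycle_ineq !sumZ !sum_x !card_Sx.
  have -> : #|int_ C :&: Ex x| = 0%N.
    apply/eqP; rewrite cards_eq0; apply/eqP/setP => e; rewrite in_set0 in_setI.
    apply/negP => /andP[e1 e2].
    by have := in_set0 e; rewrite -h0 in_setI e1 in_setU e2 orbT.
  have -> : Fc E C :&: Ex x = Fc E C.
    apply/setIidPl/subsetP => e; rewrite /Fc in_setD => /andP[eE eC].
    by have := subsetP hext e eC; rewrite in_setU (negbTE eE).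
  move: h4; clear; move: (size C) #|Fc E C|. move=> k n h4 h; exfalso.
  lia.
- move=> hx C hu h3 hIE.
  rewrite /cycle_ineq !sumZ !sum_x !card_Sx.
  have hle : (#|Fc E C :&: Ex x| <= #|Fc E C|)%N by apply/subset_leq_card/subsetIl.
  have [hsub|hnsub] := boolP (Fc E C \subset Ex x).
    have hext : ext C \subset E :|: Ex x.
      apply/subsetP => e eC; rewrite in_setU; case: (boolP (e \in E)) => //= eE.
      by apply: (subsetP hsub); rewrite /Fc in_setD eE.
    have := @chord_count _ _ hx (size C) C erefl hu h3 hext.
    rewrite setIUr hIE set0U (setIidPl hsub).
    move: h3; clear; move: (size C) #|Fc E C| #|int_ C :&: Ex x| => k n a h3 h.
    nia.
  have hlt : (#|Fc E C :&: Ex x| < #|Fc E C|)%N.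
    rewrite (ltn_leqif (subset_leqif_card (subsetIl _ _))) subsetI subxx /=.
    exact: hnsub.
  move: h3 hlt; clear; move: (size C) #|Fc E C| #|Fc E C :&: Ex x| #|int_ C :&: Ex x|.
  move=> k n s a h3 hlt.
  nia.
Qed.

Theorem proposition1 (V : finType) (E : {set {set V}}) (hE : simple_graph E) :
  (forall x : nonedge E -> bool, feasible x <-> in_XG x) /\
  (forall x : nonedge E -> bool,
     (feasible x /\ forall y : nonedge E -> bool, feasible y ->
        (objective x <= objective y)%N)
     <-> min_chordal_completion E (Ex x)).
Proof.
split; first exact: part1.
move=> x; split.
- move=> [hx hmin]; split.
    by split; [exact: Ex_sub | exact/part1].
  move=> F' [hF' hch].
  have hy : feasible (fun f : nonedge E => val f \in F').
    by apply/part1; rewrite /in_XG Ex_of.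
  by have := hmin _ hy; rewrite !obj_card Ex_of.
- move=> [[_ hch] hmin]; split; first exact/part1.
  move=> y hy; rewrite !obj_card; apply: hmin.
  by split; [exact: Ex_sub | exact/part1].
Qed.
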